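(* Let $k\geq 1$ and $n\geq 2$ be integers, let $\Omega>0$, $0<\sigma\leq m_{\min}$, and set \[ \tau=\frac{e^{-1}}{\Omega}\Big(\frac{\sigma}{m_{\min}}\Big)^{\frac{1}{2n-1}}. \] Then there exist a positive discrete measure $\mu=\sum_{j=1}^{n}a_j \delta_{\mathbf y_j}$ on $\mathbb R^k$ (all $a_j>0$) whose $n$ supports are the points $\big(-(n-\tfrac12)\tau+2m\tau,0,\dots,0\big)\in\mathbb R^k$, $m=0,1,\dots,n-1$, and a positive discrete measure $\hat \mu=\sum_{j=1}^{n}\hat a_j \delta_{\hat{\mathbf y}_j}$ on $\mathbb R^k$ (all $\hat a_j>0$) whose $n$ supports are the points $\big(-(n-\tfrac32)\tau+2m\tau,0,\dots,0\big)\in\mathbb R^k$, $m=0,1,\dots,n-1$, such that \[ \max_{\boldsymbol\omega\in\mathbb R^k,\ \|\boldsymbol\omega\|_2\leq\Omega}\big|\mathcal F[\hat \mu](\boldsymbol\omega)- \mathcal F[\mu](\boldsymbol\omega)\big|< \sigma, \qquad \min_{1\leq j\leq n}|a_j|= m_{\min}. \]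
   Context: For a discrete measure $\nu=\sum_{j} c_j\delta_{\mathbf x_j}$ on $\mathbb R^k$, its Fourier transform is $\mathcal F[\nu](\boldsymbol\omega)=\sum_j c_j e^{i \mathbf x_j\cdot\boldsymbol\omega}$, $\boldsymbol\omega\in\mathbb R^k$. Here $\Omega>0$ is the cutoff frequency, $\sigma>0$ the noise level and $m_{\min}>0$ a prescribed minimal amplitude. *)

(* Defs.v *)
From Stdlib Require Import Reals Lra.
From Coquelicot Require Import Coquelicot.
Open Scope R_scope.

(* Vectors of R^k are represented as functions nat -> R, of which only the
   coordinates 0..k-1 are used. *)

Fixpoint dotk (k : nat) (x w : nat -> R) : R :=
  match k with
  | O => 0
  | S k' => dotk k' x w + x k' * w k'
  end.

Definition norm2k (k : nat) (w : nat -> R) : R := sqrt (dotk k w w).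

Definition cexpi (t : R) : C := (cos t, sin t).

Fixpoint fourier_disc (k n : nat) (c : nat -> R) (x : nat -> nat -> R)
    (w : nat -> R) : C :=
  match n with
  | O => 0%C
  | S n' => Cplus (fourier_disc k n' c x w)
                  (Cmult (RtoC (c n')) (cexpi (dotk k (x n') w)))
  end.

Definition first_axis (t : R) : nat -> R := fun i => if Nat.eqb i 0 then t else 0.

(* Main.v *)
Require Import Defs.
From Stdlib Require Import Reals Lra Lia.
From Coquelicot Require Import Coquelicot.
Open Scope R_scope.

Fixpoint binom (n k : nat) : nat :=
  match k with
  | O => 1%nat
  | S k' => match n with O => 0%nat | S n' => (binom n' k' + binom n' (S k'))%nat end
  end.

Lemma binom_over : forall n k, (n < k)%nat -> binom n k = 0%nat.
Proof.
  induction n; intros k H; destruct k; try lia; simpl; auto.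
  rewrite !IHn; lia.
Qed.

Lemma binom_pos : forall n k, (k <= n)%nat -> (1 <= binom n k)%nat.
Proof.
  induction n; intros k H; destruct k; simpl; try lia.
  specialize (IHn k ltac:(lia)). lia.
Qed.

Lemma binom_n0 : forall n, binom n 0 = 1%nat.
Proof. destruct n; reflexivity. Qed.

Fixpoint Csum (f : nat -> C) (n : nat) : C :=
  match n with O => 0%C | S n' => Cplus (Csum f n') (f n') end.

Lemma binom_step : forall N M (w : C),
  Csum (fun j => RtoC (INR (binom (S N) j)) * w ^ j)%C (S M) =
  (Csum (fun j => RtoC (INR (binom N j)) * w ^ j)%C (S M) +
   w * Csum (fun j => RtoC (INR (binom N j)) * w ^ j)%C M)%C.
Proof.
  intros N M w. induction M.
  - simpl. rewrite binom_n0. simpl. ring.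
  - change (Csum (fun j => RtoC (INR (binom (S N) j)) * w ^ j)%C (S (S M)))
      with (Csum (fun j => RtoC (INR (binom (S N) j)) * w ^ j)%C (S M) +
            RtoC (INR (binom (S N) (S M))) * w ^ (S M))%C.
    rewrite IHM. simpl binom. rewrite plus_INR, RtoC_plus. simpl. ring.
Qed.

Lemma binom_thm : forall N (w : C),
  Csum (fun j => RtoC (INR (binom N j)) * w ^ j)%C (S N) = ((1 + w) ^ N)%C.
Proof.
  induction N; intros w.
  - simpl. ring.
  - rewrite binom_step.
    change (Csum (fun j => RtoC (INR (binom N j)) * w ^ j)%C (S (S N)))
      with (Csum (fun j => RtoC (INR (binom N j)) * w ^ j)%C (S N) +
            RtoC (INR (binom N (S N))) * w ^ (S N))%C.
    rewrite binom_over by lia. rewrite IHN. simpl. ring.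
Qed.

Lemma cexpi_add : forall x y, cexpi (x + y) = (cexpi x * cexpi y)%C.
Proof.
  intros. unfold cexpi. apply injective_projections; simpl;
  rewrite ?cos_plus, ?sin_plus; ring.
Qed.

Lemma cexpi_nat : forall j t, cexpi (INR j * t) = ((cexpi t) ^ j)%C.
Proof.
  induction j; intros t.
  - unfold cexpi. simpl. rewrite Rmult_0_l, cos_0, sin_0. reflexivity.
  - rewrite S_INR. replace ((INR j + 1) * t) with (t + INR j * t) by ring.
    rewrite cexpi_add, IHj. reflexivity.
Qed.

Lemma Cpow_opp_even : forall m (z : C), ((- z) ^ (2 * m) = z ^ (2 * m))%C.
Proof.
  induction m; intros z. reflexivity.
  replace (2 * S m)%nat with (S (S (2 * m))) by lia.
  change ((- z) ^ S (S (2 * m)))%C with (- z * (- z * (- z) ^ (2 * m)))%C.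
  change (z ^ S (S (2 * m)))%C with (z * (z * z ^ (2 * m)))%C.
  rewrite IHm. ring.
Qed.

Lemma dotk_fa : forall k t w, dotk (S k) (first_axis t) w = t * w 0%nat.
Proof.
  induction k; intros t w.
  - simpl. unfold first_axis. simpl. ring.
  - change (dotk (S (S k)) (first_axis t) w) with
      (dotk (S k) (first_axis t) w + first_axis t (S k) * w (S k)).
    rewrite IHk. unfold first_axis. simpl. ring.
Qed.

Lemma dotk_nonneg : forall k w, 0 <= dotk k w w.
Proof.
  induction k; intros w; simpl. lra.
  specialize (IHk w). nra.
Qed.

Lemma dotk_ge : forall k w, w 0%nat * w 0%nat <= dotk (S k) w w.
Proof.
  induction k; intros w; simpl. lra.
  specialize (IHk w). simpl in IHk. nra.
Qed.

Lemma abs_sin_le : forall x, Rabs (sin x) <= Rabs x.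
Proof.
  assert (H : forall x, 0 <= x -> Rabs (sin x) <= x).
  { intros x Hx. destruct (Req_dec x 0) as [->|Hx0].
    - rewrite sin_0, Rabs_R0. lra.
    - assert (sin x < x) by (apply sin_lt_x; lra).
      pose proof (SIN_bound x).
      destruct (Rle_dec x 1).
      + assert (0 <= sin x) by (apply sin_ge_0; pose proof PI2_1; lra).
        rewrite Rabs_right; lra.
      + unfold Rabs; destruct Rcase_abs; lra. }
  intros x. destruct (Rle_dec 0 x).
  - rewrite (Rabs_right x) by lra. auto.
  - rewrite (Rabs_left x) by lra. rewrite <- (Ropp_involutive x) at 1.
    rewrite sin_neg, Rabs_Ropp. apply H. lra.
Qed.

Lemma Cmod_1_cexpi : forall t, Cmod (1 - cexpi t)%C <= Rabs t.
Proof.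
  intros t. unfold Cmod, cexpi. simpl.
  rewrite <- sqrt_Rsqr_abs. apply sqrt_le_1_alt.
  assert (E : (1 - cos t) ^ 2 + (0 - sin t) ^ 2 = 4 * (sin (t/2))^2).
  { replace t with (2 * (t/2)) at 1 2 by field.
    rewrite cos_2a_sin, sin_2a. pose proof (sin2_cos2 (t/2)). unfold Rsqr in *.
    nra. }
  match goal with |- ?L <= _ => replace L with (4 * sin (t/2)^2) by (rewrite <- E; ring) end. pose proof (abs_sin_le (t/2)).
  rewrite Rabs_div in H by lra. rewrite (Rabs_right 2) in H by lra.
  unfold Rsqr.
  assert (Rabs (sin (t/2)) * Rabs (sin (t/2)) <= Rabs t / 2 * (Rabs t / 2)).
  { apply Rmult_le_compat; auto using Rabs_pos. }
  rewrite <- Rabs_mult in H0. rewrite Rabs_right in H0 by nra.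
  replace (Rabs t / 2 * (Rabs t / 2)) with ((Rabs t * Rabs t) / 4) in H0 by field.
  rewrite <- Rabs_mult, Rabs_right in H0 by nra. nra.
Qed.

Lemma Cmod_cexpi : forall t, Cmod (cexpi t) = 1.
Proof.
  intros t. unfold Cmod, cexpi. simpl.
  match goal with |- sqrt ?L = 1 => replace L with 1 end. apply sqrt_1.
  pose proof (sin2_cos2 t). unfold Rsqr in H. nra.
Qed.

Lemma main_identity : forall k N (mm s tau w0 : R) (w : nat -> R)
  (a ahat : nat -> R) (y yhat : nat -> nat -> R),
  (forall m, a m = mm * INR (binom N (2 * m))) ->
  (forall m, ahat m = mm * INR (binom N (2 * m + 1))) ->
  (forall m, dotk k (y m) w = s * w0 + INR (2 * m) * (tau * w0)) ->
  (forall m, dotk k (yhat m) w = s * w0 + INR (2 * m + 1) * (tau * w0)) ->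
  forall m,
  Cminus (fourier_disc k m ahat yhat w) (fourier_disc k m a y w) =
  (- RtoC mm * cexpi (s * w0) *
   Csum (fun j => RtoC (INR (binom N j)) * (- cexpi (tau * w0)) ^ j)%C (2 * m))%C.
Proof.
  intros k N mm s tau w0 w a ahat y yhat Ha Hah Hy Hyh m.
  induction m.
  - simpl. unfold Cminus. ring.
  - replace (2 * S m)%nat with (S (S (2 * m))) by lia.
    simpl fourier_disc.
    change (Csum ?f (S (S (2 * m)))) with (Csum f (2 * m) + f (2 * m)%nat + f (S (2 * m)))%C.
    cbv beta.
    rewrite Hy, Hyh, Ha, Hah, !cexpi_add, !cexpi_nat.
    replace (S (2 * m)) with (2 * m + 1)%nat by lia.
    rewrite Cpow_opp_even.
    replace ((- cexpi (tau * w0)) ^ (2 * m + 1))%C with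
      (- (cexpi (tau * w0)) ^ (2 * m + 1))%C.
    2:{ replace (2 * m + 1)%nat with (S (2 * m)) by lia.
        change ((- cexpi (tau * w0)) ^ S (2 * m))%C with (- cexpi (tau * w0) * (- cexpi (tau * w0)) ^ (2 * m))%C.
        change (cexpi (tau * w0) ^ S (2 * m))%C with (cexpi (tau * w0) * cexpi (tau * w0) ^ (2 * m))%C.
        rewrite Cpow_opp_even. ring. }
    unfold Cminus in *.
    transitivity ((fourier_disc k m ahat yhat w - fourier_disc k m a y w) +
      (RtoC (mm * INR (binom N (2 * m + 1))) * (cexpi (s * w0) * cexpi (tau * w0) ^ (2 * m + 1))
       - RtoC (mm * INR (binom N (2 * m))) * (cexpi (s * w0) * cexpi (tau * w0) ^ (2 * m))))%C.
    { unfold Cminus. ring. }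
    unfold Cminus. rewrite IHm. rewrite !RtoC_mult. ring.
Qed.

Theorem theorem3p4 (k n : nat) (Omega sigma m_min : R) :
  (1 <= k)%nat -> (2 <= n)%nat ->
  0 < Omega -> 0 < sigma -> sigma <= m_min ->
  let tau := exp (-1) / Omega * Rpower (sigma / m_min) (1 / (2 * INR n - 1)) in
  exists a ahat : nat -> R,
    (forall j, (j < n)%nat -> 0 < a j) /\
    (forall j, (j < n)%nat -> 0 < ahat j) /\
    let y := fun m => first_axis (- (INR n - 1/2) * tau + 2 * INR m * tau) in
    let yhat := fun m => first_axis (- (INR n - 3/2) * tau + 2 * INR m * tau) in
    (forall w : nat -> R, norm2k k w <= Omega ->
       Cmod (Cminus (fourier_disc k n ahat yhat w) (fourier_disc k n a y w)) < sigma) /\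
    ((forall j, (j < n)%nat -> m_min <= Rabs (a j)) /\
     exists j, (j < n)%nat /\ Rabs (a j) = m_min).
Proof.
  intros Hk Hn HO Hs Hsm tau.
  set (N := (2 * n - 1)%nat).
  assert (HNr : INR N = 2 * INR n - 1).
  { unfold N. rewrite minus_INR by lia. rewrite mult_INR. simpl. ring. }
  assert (Hn2 : 2 <= INR n) by (replace 2 with (INR 2) by (simpl; ring); apply le_INR; lia).
  assert (Hm : 0 < m_min) by lra.
  set (r := Rpower (sigma / m_min) (1 / (2 * INR n - 1))).
  assert (Hr : 0 < r) by (unfold r, Rpower; apply exp_pos).
  assert (Htau : 0 < tau).
  { unfold tau. fold r. apply Rmult_lt_0_compat; auto.
    apply Rdiv_lt_0_compat; auto. apply exp_pos. }
  exists (fun m => m_min * INR (binom N (2 * m))),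
         (fun m => m_min * INR (binom N (2 * m + 1))).
  split.
  { intros j Hj. apply Rmult_lt_0_compat; auto. apply lt_0_INR.
    pose proof (binom_pos N (2 * j) ltac:(unfold N; lia)). lia. }
  split.
  { intros j Hj. apply Rmult_lt_0_compat; auto. apply lt_0_INR.
    pose proof (binom_pos N (2 * j + 1) ltac:(unfold N; lia)). lia. }
  intros y yhat. split.
  - intros w Hw. destruct k as [|k']; [lia|].
    assert (Hy : forall m, dotk (S k') (y m) w =
       (- (INR n - 1/2) * tau) * w 0%nat + INR (2 * m) * (tau * w 0%nat)).
    { intros m. unfold y. rewrite dotk_fa, mult_INR.
      replace (INR 2) with 2 by (simpl; ring). ring. }
    assert (Hyh : forall m, dotk (S k') (yhat m) w =
       (- (INR n - 1/2) * tau) * w 0%nat + INR (2 * m + 1) * (tau * w 0%nat)).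
    { intros m. unfold yhat. rewrite dotk_fa, plus_INR, mult_INR.
      replace (INR 2) with 2 by (simpl; ring). simpl (INR 1). field. }
    rewrite (main_identity (S k') N m_min (- (INR n - 1/2) * tau) tau (w 0%nat) w
      _ _ y yhat (fun m => eq_refl) (fun m => eq_refl) Hy Hyh n).
    replace (2 * n)%nat with (S N) by (unfold N; lia).
    rewrite binom_thm.
    rewrite !Cmod_mult, Cmod_opp, Cmod_R, Cmod_cexpi, Cmod_pow.
    rewrite Rabs_right by lra.
    assert (Hw0 : Rabs (w 0%nat) <= Omega).
    { eapply Rle_trans; [|exact Hw]. unfold norm2k.
      rewrite <- sqrt_Rsqr_abs. apply sqrt_le_1_alt. unfold Rsqr. apply dotk_ge. }
    assert (Hc : Cmod (1 + - cexpi (tau * w 0%nat))%C <= tau * Omega).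
    { change (1 + - cexpi (tau * w 0%nat))%C with (1 - cexpi (tau * w 0%nat))%C.
      eapply Rle_trans. apply Cmod_1_cexpi.
      rewrite Rabs_mult, (Rabs_right tau) by lra.
      apply Rmult_le_compat_l; lra. }
    assert (HP : Cmod (1 + - cexpi (tau * w 0%nat))%C ^ N <= (tau * Omega) ^ N).
    { apply pow_incr. split; auto. apply Cmod_ge_0. }
    assert (HtO : tau * Omega = exp (-1) * r) by (unfold tau; fold r; field; lra).
    rewrite HtO, Rpow_mult_distr in HP.
    assert (HrN : r ^ N = sigma / m_min).
    { rewrite <- Rpower_pow by auto. unfold r. rewrite Rpower_mult.
      rewrite HNr. replace (1 / (2 * INR n - 1) * (2 * INR n - 1)) with 1 by (field; lra).
      apply Rpower_1. apply Rdiv_lt_0_compat; lra. }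
    rewrite HrN in HP.
    assert (He : 0 <= exp (-1) ^ N < 1).
    { apply pow_lt_1_compat; [|unfold N; lia]. split. left; apply exp_pos.
      rewrite <- exp_0. apply exp_increasing. lra. }
    apply Rle_lt_trans with (m_min * 1 * (exp (-1) ^ N * (sigma / m_min))).
    { apply Rmult_le_compat_l; lra. }
    replace (m_min * 1 * (exp (-1) ^ N * (sigma / m_min))) with (exp (-1) ^ N * sigma)
      by (field; lra).
    nra.
  - split.
    + intros j Hj. rewrite Rabs_right.
      * pose proof (binom_pos N (2 * j) ltac:(unfold N; lia)).
        apply le_INR in H. change (INR 1) with 1 in H. nra.
      * apply Rle_ge, Rmult_le_pos; [lra | apply pos_INR].
    + exists 0%nat. split; [lia|]. simpl. rewrite binom_n0. simpl.
      rewrite Rmult_1_r. apply Rabs_right. lra.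
Qed.
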